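(* Let $t$ be an illegal signed batch tag posted in L1 and not yet confirmed, and let $A$ be an honest agent that knows all transactions of $t$ and all transactions in already confirmed batches. Then $A$ can prevent the confirmation of $t$ (by winning the appropriate signature, validity, or integrity challenge, causing $t$ to be discarded).
   Context: Setting: L2 blockchain with an arranger of server processes, at most an unbounded number of which may be Byzantine; $f$ is the fault parameter of the arranger. A signed batch tag $t=(\mathit{batchId},h,\sigma)$ posted in L1 consists of a batch identifier, the Merkle root hash $h$ of a batch $b$ of transactions, and a combined signature $\sigma$; stakers stake on $t$, and $t$ is confirmed after a delay unless discarded by a challenge. $t$ is legal iff: (B1) $\sigma$ contains at least $f+1$ valid arranger process signatures; (B2) $b$ contains only valid transactions; (B3) no transaction in $b$ is duplicated; (B4) no transaction in $b$ appears in a previously confirmed batch; illegal otherwise. Challenges (L1 contracts): Signature challenge (B1): L1 contracts check the number of signers and verify the aggregate signature; if incorrect, $t$ is discarded and all stakers lose their stakes. Validity challenge (B2): challenger presents an invalid transaction $e$, its hash $h_e$, its position, and the hash of the middle node of the Merkle path from the leaf to the root; the contract checks invalidity of $e$ and that $e$ hashes to $h_e$; then a bisection game over the path: the staker selects a subpath to challenge, the challenger provides the middle node hash if the subpath has more than two nodes; when the subpath has two nodes with parent hash $h_p$ and child hash $h_c$, the challenger must post $h$ such that hashing the concatenation of $h$ and $h_c$ gives $h_p$; if so the challenger wins and the staker loses its stake. Integrity challenge 1 (B3): same, with the challenger supplying two Merkle paths in $t$ with leaf $e$. Integrity challenge 2 (B4): same, with one path in $t$ and one path in a previously confirmed tag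 $t'$ with leaf $e$. Hashes are assumed collision resistant. *)

(* Defs.v *)
From mathcomp Require Import all_boot.
From Stdlib Require List.
Set Implicit Arguments. Unset Strict Implicit. Unset Printing Implicit Defensive.

Section Model.
Variables (Tx Hash Proc PSig BId : eqType).
(* hash of a leaf (transaction) and hash of the concatenation of two hashes *)
Variables (hleaf : Tx -> Hash) (hnode : Hash -> Hash -> Hash).
(* verification of a partial signature of arranger process p on (batchId, h) *)
Variable verify : Proc -> BId -> Hash -> PSig -> bool.
Variable valid : pred Tx.
(* fault parameter of the arranger *)
Variable f : nat.

(* A batch, as the Merkle tree over its transactions *)
Inductive mtree := MLeaf of Tx | MNode of mtree & mtree.

Fixpoint leaves (b : mtree) : seq Tx :=
  match b with MLeaf x => [:: x] | MNode l r => leaves l ++ leaves r end.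

Fixpoint mroot (b : mtree) : Hash :=
  match b with MLeaf x => hleaf x | MNode l r => hnode (mroot l) (mroot r) end.

(* signed batch btag (batchId, h, sigma); sigma is the combined signature,
   given as the list of (process, partial signature) pairs it aggregates *)
Record btag := BTag { batchId : BId; thash : Hash; tsig : seq (Proc * PSig) }.

Definition valid_signers (t : btag) : nat :=
  size (undup [seq x.1 | x <- tsig t & verify x.1 (batchId t) (thash t) x.2]).

Definition B1 (t : btag) : Prop := f.+1 <= valid_signers t.
Definition B2 (b : mtree) : Prop := all valid (leaves b).
Definition B3 (b : mtree) : Prop := uniq (leaves b).
Definition B4 (b : mtree) (confirmed : list (btag * mtree)) : Prop :=
  forall c, List.In c confirmed -> forall x, x \in leaves b -> x \notin leaves c.2.

Definition legal (t : btag) (b : mtree) (confirmed : list (btag * mtree)) : Prop :=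
  [/\ B1 t, B2 b, B3 b & B4 b confirmed].

(* A position in a Merkle tree is given leaf-to-root as a list of bits:
   dirs`_k = true iff the k-th node of the path (node 0 = leaf) is a right
   child.  The parent of child hc with sibling s is the hash of the
   concatenation of s and hc in tree order. *)
Definition parent (isright : bool) (s hc : Hash) : Hash :=
  if isright then hnode s hc else hnode hc s.

(* Bisection game on the segment of the path from node i to node i+len,
   whose end hashes ni (lower) and nj (upper) are already posted.
   The proposition says that the challenger has a winning strategy:
   - one node (len = 0): the posted hashes must coincide;
   - two nodes (parent nj, child ni): the challenger must post some h such
     that hashing the concatenation of h and ni gives nj;
   - otherwise the challenger posts the middle node hash nm and the staker
     chooses which of the two subpaths to challenge. *)
Fixpoint bisect (fuel : nat) (dirs : seq bool) (i len : nat) (ni nj : Hash) : Prop :=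
  match fuel with
  | 0 => False
  | fuel'.+1 =>
    match len with
    | 0 => ni = nj
    | 1 => exists h, parent (nth false dirs i) h ni = nj
    | _ => exists nm, bisect fuel' dirs i len./2 ni nm /\
                      bisect fuel' dirs (i + len./2) (len - len./2) nm nj
    end
  end.

Definition path_game (dirs : seq bool) (he hr : Hash) : Prop :=
  bisect (size dirs).+1 dirs 0 (size dirs) he hr.

Inductive challenge :=
| SigChallenge
| ValidityChallenge of Tx & seq bool
| Integrity1 of Tx & seq bool & seq bool
| Integrity2 of Tx & seq bool & btag & seq bool.

(* The challenger can win challenge c against btag t (the L1 contracts only
   see t, the previously confirmed tags and the data posted in the game). *)
Definition challenger_wins (t : btag) (confirmed : list (btag * mtree))
    (c : challenge) : Prop :=
  match c with
  | SigChallenge => ~ B1 t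
  | ValidityChallenge e dirs =>
      ~~ valid e /\ path_game dirs (hleaf e) (thash t)
  | Integrity1 e d1 d2 =>
      d1 <> d2 /\ path_game d1 (hleaf e) (thash t) /\ path_game d2 (hleaf e) (thash t)
  | Integrity2 e d1 t' d2 =>
      List.In t' (map fst confirmed) /\
      path_game d1 (hleaf e) (thash t) /\ path_game d2 (hleaf e) (thash t')
  end.

Definition can_prevent_confirmation (t : btag) (confirmed : list (btag * mtree)) : Prop :=
  exists c, challenger_wins t confirmed c.

End Model.

(* Collision resistance of the hash, modelled as absence of collisions *)
Definition collision_free (Tx Hash : eqType) (hleaf : Tx -> Hash)
  (hnode : Hash -> Hash -> Hash) : Prop :=
  [/\ injective hleaf,
      (forall a b c d, hnode a b = hnode c d -> a = c /\ b = d)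
    & (forall x a b, hleaf x <> hnode a b)].

(* Main.v *)
From Stdlib Require Import Classical.
Require Import Defs.
From mathcomp Require Import all_boot.
From Stdlib Require List.
From mathcomp Require Import zify.

Set Implicit Arguments.
Section Aux.
Variables (Tx Hash : eqType) (hleaf : Tx -> Hash) (hnode : Hash -> Hash -> Hash).

Fixpoint paths (b : mtree Tx) : seq (Tx * seq bool) :=
  match b with
  | MLeaf x => [:: (x, [::])]
  | MNode l r => [seq (p.1, rcons p.2 false) | p <- paths l] ++
                 [seq (p.1, rcons p.2 true) | p <- paths r]
  end.

Lemma paths_fst b : map fst (paths b) = leaves b.
Proof.
elim: b => [x|l IHl r IHr] //=.
by rewrite map_cat -!map_comp -IHl -IHr.
Qed.

Lemma paths_snd_uniq b : uniq (map snd (paths b)).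
Proof.
elim: b => [x|l IHl r IHr] //=.
rewrite map_cat -!map_comp cat_uniq.
have inj (c : bool) : injective (fun s : seq bool => rcons s c).
  by move=> s1 s2 /(congr1 (@rev _)); rewrite !rev_rcons => -[] /(congr1 (@rev _)); rewrite !revK.
apply/and3P; split.
- rewrite (map_comp (fun s => rcons s false) snd) map_inj_uniq //.
- apply/hasPn => y /mapP [p _ ->] /=; apply/negP => /mapP [q _ /= /(congr1 (last true))].
  by rewrite !last_rcons.
- rewrite (map_comp (fun s => rcons s true) snd) map_inj_uniq //.
Qed.

Definition chain (dirs : seq bool) (node : nat -> Hash) i len :=
  forall k, i <= k < i + len -> exists s, parent hnode (nth false dirs k) s (node k) = node k.+1.

Lemma paths_chain b x d : (x, d) \in paths b ->
  exists node, [/\ node 0 = hleaf x, node (size d) = mroot hleaf hnode b & chain d node 0 (size d)].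
Proof.
elim: b x d => [y|l IHl r IHr] x d /=.
  rewrite inE => /eqP [-> ->]; exists (fun _ => hleaf y); split => // k /=.
rewrite mem_cat => /orP [] /mapP [[x' d'] Hin [-> ->]] /=.
- have [node [H0 Hs Hc]] := IHl _ _ Hin.
  exists (fun k => if k <= size d' then node k else hnode (mroot hleaf hnode l) (mroot hleaf hnode r)).
  rewrite size_rcons; split => //=; first by rewrite ltnn.
  move=> k /andP [_ Hk]; rewrite add0n ltnS leq_eqVlt in Hk.
  case/orP: Hk => [/eqP -> | Hk].
    rewrite leqnn ltnn nth_rcons ltnn eqxx Hs; exists (mroot hleaf hnode r) => //.
  rewrite (ltnW Hk) Hk nth_rcons Hk; exact: Hc.
- have [node [H0 Hs Hc]] := IHr _ _ Hin.
  exists (fun k => if k <= size d' then node k else hnode (mroot hleaf hnode l) (mroot hleaf hnode r)).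
  rewrite size_rcons; split => //=; first by rewrite ltnn.
  move=> k /andP [_ Hk]; rewrite add0n ltnS leq_eqVlt in Hk.
  case/orP: Hk => [/eqP -> | Hk].
    rewrite leqnn ltnn nth_rcons ltnn eqxx Hs; exists (mroot hleaf hnode l) => //.
  rewrite (ltnW Hk) Hk nth_rcons Hk; exact: Hc.
Qed.

Lemma bisect_chain dirs node fuel : forall i len, len < fuel -> chain dirs node i len ->
  bisect hnode fuel dirs i len (node i) (node (i + len)).
Proof.
elim: fuel => [//|fuel IH] i len Hlt Hc.
case: len Hlt Hc => [|[|len]] Hlt Hc /=.
- by rewrite addn0.
- case: (Hc i) => [|s Hs]; first by rewrite leqnn addn1 ltnSn.
  by exists s; rewrite addn1.
- have Hh1 : 1 <= (len.+2)./2 by [].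
  have Hh2 : (len.+2)./2 <= len.+1.
    by rewrite -divn2; lia.
  move: Hh1 Hh2; set h := (len.+2)./2 => Hh1 Hh2.
  exists (node (i + h)); split.
  + apply: IH; first lia.
    move=> k /andP [H1 H2]; apply: Hc; apply/andP; split; lia.
  + have -> : i + len.+2 = i + h + (len.+2 - h) by lia.
    apply: IH; first lia.
    move=> k /andP [H1 H2]; apply: Hc; apply/andP; split; lia.
Qed.

Lemma path_game_of b x d : (x, d) \in paths b ->
  path_game hnode d (hleaf x) (mroot hleaf hnode b).
Proof.
move=> /paths_chain [node [H0 Hs Hc]].
rewrite /path_game -H0 -Hs -(add0n (size d)); exact: bisect_chain.
Qed.

End Aux.

Theorem mainTheorem2 (Tx Hash Proc PSig BId : eqType)
  (hleaf : Tx -> Hash) (hnode : Hash -> Hash -> Hash)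
  (verify : Proc -> BId -> Hash -> PSig -> bool) (valid : pred Tx) (f : nat)
  (t : btag Hash Proc PSig BId) (b : mtree Tx)
  (confirmed : list (btag Hash Proc PSig BId * mtree Tx)) :
  collision_free hleaf hnode ->
  (* h in t is the Merkle root of the batch b of t *)
  thash t = mroot hleaf hnode b ->
  (* confirmed tags carry the Merkle roots of their batches *)
  (forall c, List.In c confirmed -> thash c.1 = mroot hleaf hnode c.2) ->
  (* t is not yet confirmed *)
  ~ List.In t (map fst confirmed) ->
  (* t is illegal *)
  ~ legal verify valid f t b confirmed ->
  can_prevent_confirmation hleaf hnode verify valid f t confirmed.
Proof.
move=> _ Ht Hconf _ Hill.
have inleaf : forall (b' : mtree Tx) (x : Tx), x \in leaves b' -> exists d, (x, d) \in paths b'.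
  move=> b' x; rewrite -(paths_fst b') => /mapP [[y d] Hin /= ->]; by exists d.
case: (classic (B1 verify f t)) => H1; last by exists (SigChallenge _ _ _ _ _).
case: (classic (B2 valid b)) => H2.
  case: (classic (B3 b)) => H3.
    case: (classic (B4 b confirmed)) => H4; first by case: Hill; split.
    have [c Hc] := not_all_ex_not _ _ H4.
    have [Hin Hc'] := imply_to_and _ _ Hc.
    have [x Hx] := not_all_ex_not _ _ Hc'.
    have [Hxb Hxc] := imply_to_and _ _ Hx.
    move/negP/negPn: Hxc => Hxc.
    have [d1 Hd1] := inleaf _ _ Hxb.
    have [d2 Hd2] := inleaf _ _ Hxc.
    exists (Integrity2 x d1 c.1 d2); split; first exact: List.in_map.
    by rewrite Ht (Hconf _ Hin); split; apply: path_game_of.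
  have Hsnd := paths_snd_uniq b.
  have : ~~ uniq (map fst (paths b)) by rewrite paths_fst; apply/negP.
  have Hu : uniq (paths b) by move: Hsnd; apply: map_uniq.
  case: (classic (exists p q, [/\ p \in paths b, q \in paths b, p.1 = q.1 & p.2 <> q.2])).
    move=> [[x d1] [[y d2] [Hp Hq /= Hxy Hd]]]; subst y.
    exists (Integrity1 _ _ _ _ x d1 d2) => /=; rewrite Ht; split => //; split; exact: path_game_of.
  move=> Hno /negP Hnu; exfalso; apply: Hnu.
  rewrite map_inj_in_uniq //.
  move=> [x d1] [y d2] Hp Hq /= Hxy.
  case: (classic (d1 = d2)) => [->|Hd]; first by rewrite Hxy.
  by case: Hno; exists (x, d1), (y, d2); split.
have [x Hxb Hxv] : exists2 x, x \in leaves b & ~~ valid x.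
  by apply/allPn; apply/negP.
have [d Hd] := inleaf _ _ Hxb.
exists (ValidityChallenge _ _ _ _ x d) => /=; rewrite Ht; split => //; exact: path_game_of.
Qed.
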